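(* Let $(b,c)$ be a locally finite, connected graph over a countable set $X$ on which $\mathbb{Z}^d$ acts freely and cocompactly with fundamental domain $V$ (so every $x\in X$ is uniquely $x=zv$, $z\in\mathbb{Z}^d$, $v\in V$), such that $H_{b,c}$ is $\mathbb{Z}^d$-invariant; fix $x_0\in X$. For $\alpha\in\mathbb{R}^d$ let $Q_\alpha$ be the $V\times V$ matrix with $(Q_\alpha)_{v,w}=\sum_{z\in\mathbb{Z}^d}b(v,zw)e^{\langle\alpha,z\rangle}$ for $v\neq w$ and $(Q_\alpha)_{v,v}=\sum_{z\in\mathbb{Z}^d}b(v,zv)e^{\langle\alpha,z\rangle}+\max_{w\in V}\deg(w)-\deg(v)$; it is nonnegative and irreducible, with Perron–Frobenius eigenvalue $\theta(\alpha)$ and positive Perron–Frobenius eigenvector $\varphi_\alpha$. Then the map $\rho:\mathcal{M}_\mathbb{R}\to\mathbb{R}^d$ is bijective, with inverse $\rho^{-1}(\alpha)(zv)=e^{\langle\alpha,z\rangle}\varphi_\alpha(v)$ ($z\in\mathbb{Z}^d$, $v\in V$), where $\varphi_\alpha$ is normalised so that this function equals $1$ at $x_0$. Moreover, $\rho^{-1}(\alpha)\in\mathcal{M}_\lambda$ with $\lambda=\max_{v\in V}\deg(v)-\theta(\alpha)$.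
   Context: A graph over $X$ is $(b,c)$ with $b:X\times X\to[0,\infty)$, $c:X\to\mathbb{R}$, $\sum_yb(x,y)<\infty$ ($b$ need not be symmetric); locally finite and connected as usual ($x\sim y$ iff $b(x,y)>0$). $\deg(x)=\sum_yb(x,y)+c(x)$. $H_{b,c}f(x)=\sum_yb(x,y)(f(x)-f(y))+c(x)f(x)$ on $\mathrm{Dom}(H)=\{f:\sum_yb(x,y)|f(y)|<\infty\ \forall x\}$; $f$ is $\lambda$-harmonic if $(H-\lambda)f=0$. $T_gf(x)=f(g^{-1}x)$; $H$ is $\mathbb{Z}^d$-invariant if $T_g$ preserves $\mathrm{Dom}(H)$ and $HT_g=T_gH$. $f$ is multiplicative with character $\gamma_f$ if $\gamma_f:\mathbb{Z}^d\to(0,\infty)$ is a homomorphism with $f(zx)=\gamma_f(z)f(x)$. $\mathcal{K}_\lambda$ is the pointwise closure of $\{f\ge0,\ f\not\equiv0,\ \lambda\text{-harmonic},\ f(x_0)=1\}$, $\mathcal{M}_\lambda$ its multiplicative elements, $\mathcal{M}_\mathbb{R}=\bigcup_\lambda\mathcal{M}_\lambda$. $\rho(f)$ is the vector $\alpha\in\mathbb{R}^d$ with $\log\gamma_f(z)=\langle\alpha,z\rangle$ for all $z\in\mathbb{Z}^d$. *)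

(* Defs.v *)
From HB Require Import structures.
From mathcomp Require Import all_boot all_order all_algebra.
From mathcomp Require Import all_classical all_reals all_analysis.
Set Implicit Arguments. Unset Strict Implicit. Unset Printing Implicit Defensive.
Import Order.TTheory GRing.Theory Num.Theory.
Local Open Scope classical_set_scope.
Local Open Scope ring_scope.

Definition ip (R : realType) (d : nat) (a : 'rV[R]_d) (z : 'rV[int]_d) : R :=
  \sum_(i < d) a 0 i * (z 0 i)%:~R.

(* sum over all t : T (finitely supported sums, fsbigop); under local
   finiteness all sums used below have finite support. *)
Definition tsum (R : realType) (T : choiceType) (F : T -> R) : R :=
  \sum_(t \in [set: T]) F t.

Section Graph.
Context (R : realType) (X : countType).

Definition deg (b : X -> X -> R) (c : X -> R) (x : X) : R :=
  tsum (fun y => b x y) + c x.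

Definition Hop (b : X -> X -> R) (c : X -> R) (f : X -> R) (x : X) : R :=
  tsum (fun y => b x y * (f x - f y)) + c x * f x.

Definition locally_finite (b : X -> X -> R) : Prop :=
  forall x, finite_set [set y | 0 < b x y].

Definition graph_connected (b : X -> X -> R) : Prop :=
  forall x y, exists s : seq X, path (fun u w => 0 < b u w) x s && (last x s == y).

Definition harmonic (b : X -> X -> R) (c : X -> R) (lam : R) (f : X -> R) : Prop :=
  forall x, Hop b c f x - lam * f x = 0.

Definition pos_harm_norm (b : X -> X -> R) (c : X -> R) (x0 : X) (lam : R)
  (f : X -> R) : Prop :=
  [/\ (forall x, 0 <= f x), (exists x, f x != 0), harmonic b c lam f & f x0 = 1].

(* closure in the topology of pointwise convergence (product topology on R^X) *)
Definition pw_closure (S : (X -> R) -> Prop) (f : X -> R) : Prop :=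
  forall (F : seq X) (e : R), 0 < e ->
    exists g, S g /\ forall x, x \in F -> `|g x - f x| < e.

Definition Kset (b : X -> X -> R) (c : X -> R) (x0 : X) (lam : R) : (X -> R) -> Prop :=
  pw_closure (pos_harm_norm b c x0 lam).

Context (d : nat).

Definition is_action (act : 'rV[int]_d -> X -> X) : Prop :=
  (forall x, act 0 x = x) /\ (forall z1 z2 x, act (z1 + z2) x = act z1 (act z2 x)).

Definition transl (act : 'rV[int]_d -> X -> X) (g : 'rV[int]_d) (f : X -> R) : X -> R :=
  fun x => f (act (- g) x).

Definition H_invariant (b : X -> X -> R) (c : X -> R) (act : 'rV[int]_d -> X -> X) : Prop :=
  forall g f x, Hop b c (transl act g f) x = transl act g (Hop b c f) x.

Definition is_character (gam : 'rV[int]_d -> R) : Prop :=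
  (forall z, 0 < gam z) /\ (forall z1 z2, gam (z1 + z2) = gam z1 * gam z2).

Definition multiplicative_with (act : 'rV[int]_d -> X -> X) (f : X -> R)
  (gam : 'rV[int]_d -> R) : Prop :=
  is_character gam /\ forall z x, f (act z x) = gam z * f x.

Definition Mset (b : X -> X -> R) (c : X -> R) (act : 'rV[int]_d -> X -> X) (x0 : X)
  (lam : R) (f : X -> R) : Prop :=
  Kset b c x0 lam f /\ exists gam, multiplicative_with act f gam.

Definition MRset (b : X -> X -> R) (c : X -> R) (act : 'rV[int]_d -> X -> X) (x0 : X)
  (f : X -> R) : Prop :=
  exists lam, Mset b c act x0 lam f.

Definition rho_is (act : 'rV[int]_d -> X -> X) (f : X -> R) (a : 'rV[R]_d) : Prop :=
  exists gam, multiplicative_with act f gam /\ forall z, ln (gam z) = ip a z.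

Context (V : finType).

Definition maxdeg (b : X -> X -> R) (c : X -> R) (iota : V -> X) : R :=
  let s := [seq deg b c (iota w) | w <- enum V] in
  \big[Num.max/head 0 s]_(t <- s) t.

Definition Qmat (b : X -> X -> R) (c : X -> R) (act : 'rV[int]_d -> X -> X)
  (iota : V -> X) (a : 'rV[R]_d) (v w : V) : R :=
  tsum (fun z : 'rV[int]_d => b (iota v) (act z (iota w)) * expR (ip a z))
  + (if v == w then maxdeg b c iota - deg b c (iota v) else 0).

End Graph.

Section Matrix.
Context (R : realType) (V : finType).

Definition mulv (Q : V -> V -> R) (u : V -> R) (v : V) : R := \sum_(w : V) Q v w * u w.

(* a + i b is an eigenvalue of Q, with complex eigenvector u + i w *)
Definition complex_eigenvalue (Q : V -> V -> R) (a bb : R) : Prop :=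
  exists u w : V -> R, (exists v, (u v != 0) || (w v != 0)) /\
    forall v, mulv Q u v = a * u v - bb * w v /\ mulv Q w v = bb * u v + a * w v.

Definition PF_eigenvalue (Q : V -> V -> R) (th : R) : Prop :=
  [/\ 0 <= th, complex_eigenvalue Q th 0 &
      forall a bb, complex_eigenvalue Q a bb -> a ^+ 2 + bb ^+ 2 <= th ^+ 2].

Definition PF_eigenvector (Q : V -> V -> R) (th : R) (phi : V -> R) : Prop :=
  (forall v, 0 < phi v) /\ forall v, mulv Q phi v = th * phi v.

End Matrix.

(* Main.v *)
Require Import Defs.
From HB Require Import structures.
From mathcomp Require Import all_boot all_order all_algebra.
From mathcomp Require Import all_classical all_reals all_analysis.
From mathcomp Require Import ring lra zify.
Import Order.TTheory GRing.Theory Num.Theory.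
Import numFieldNormedType.Exports.
Local Open Scope classical_set_scope.
Local Open Scope ring_scope.
Set Implicit Arguments. Unset Strict Implicit. Unset Printing Implicit Defensive.
Section PF1.
Context (R : realType) (V : finType) (Q : V -> V -> R).
Hypothesis Q0 : forall u v, 0 <= Q u v.
Hypothesis Qirr : forall (S : pred V) v w, S v -> ~~ S w ->
  exists u u', [/\ S u, ~~ S u' & 0 < Q u u'].

Lemma ex_argmin (F : V -> R) (v0 : V) : exists v, forall w, F v <= F w.
Proof. by case: (@arg_minP _ _ _ v0 xpredT F isT) => v _ H; exists v => w; exact: H. Qed.

Lemma ex_argmax (F : V -> R) (v0 : V) : exists v, forall w, F w <= F v.
Proof. by case: (@arg_maxP _ _ _ v0 xpredT F isT) => v _ H; exists v => w; exact: H. Qed.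

Lemma sum_ge_term (F : V -> R) u : (forall w, 0 <= F w) -> F u <= \sum_w F w.
Proof. by move=> F0; rewrite (bigD1 u) //= lerDl sumr_ge0. Qed.

Lemma mulv_ge0 x v : (forall w, 0 <= x w) -> 0 <= mulv Q x v.
Proof. by move=> x0; rewrite /mulv sumr_ge0 // => w _; rewrite mulr_ge0. Qed.

Lemma pos_of_eig x mu : (forall v, 0 <= x v) -> (exists v, x v != 0) ->
  (forall v, mulv Q x v = mu * x v) -> forall v, 0 < x v.
Proof.
move=> x0 [w xw] eig v; rewrite lt0r x0 andbT; apply/negP => xv0.
have [u [u' [Su Su' Quu']]] := @Qirr [pred v | x v == 0] v w xv0 xw.
have : 0 < mulv Q x u.
  apply: (lt_le_trans _ (sum_ge_term u' _)); last by move=> z; rewrite mulr_ge0.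
  by rewrite mulr_gt0 // lt0r Su' x0.
by rewrite eig (eqP Su) mulr0 ltxx.
Qed.

Lemma mulvB x y s v : mulv Q (fun w => x w - s * y w) v = mulv Q x v - s * mulv Q y v.
Proof.
rewrite /mulv mulr_sumr -sumrB; apply: eq_bigr => w _; ring.
Qed.

Lemma eig_le phi th psi mu (v0 : V) :
  (forall v, 0 < phi v) -> (forall v, mulv Q phi v = th * phi v) ->
  (forall v, 0 < psi v) -> (forall v, mulv Q psi v = mu * psi v) -> mu <= th.
Proof.
move=> phi0 eph psi0 eps; rewrite leNgt; apply/negP => lt.
have [v1 hv1] := ex_argmin (fun w => phi w / psi w) v0.
set s := phi v1 / psi v1 in hv1.
have u0 : forall w, 0 <= phi w - s * psi w.
  move=> w; rewrite subr_ge0 -ler_pdivlMr //; exact: hv1.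
have := mulv_ge0 v1 u0; rewrite mulvB eph eps.
have -> : phi v1 = s * psi v1 by rewrite /s mulfVK // gt_eqF.
have s0 : 0 < s by rewrite divr_gt0.
have := psi0 v1; move: (psi v1) => p p0.
have -> : th * (s * p) - s * (mu * p) = (s * p) * (th - mu) by ring.
have sp : 0 < s * p by rewrite mulr_gt0.
rewrite pmulr_rge0 // => h; lra.
Qed.

Lemma eig_prop phi th psi mu (v0 : V) :
  (forall v, 0 < phi v) -> (forall v, mulv Q phi v = th * phi v) ->
  (forall v, 0 < psi v) -> (forall v, mulv Q psi v = mu * psi v) ->
  mu = th /\ exists t, 0 < t /\ forall v, psi v = t * phi v.
Proof.
move=> phi0 eph psi0 eps.
have emu : mu = th.
  by apply/eqP; rewrite eq_le (eig_le v0 phi0 eph psi0 eps) (eig_le v0 psi0 eps phi0 eph).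
split => //; subst mu.
have [v1 hv1] := ex_argmin (fun w => psi w / phi w) v0.
set t := psi v1 / phi v1 in hv1.
have u0 : forall w, 0 <= psi w - t * phi w.
  move=> w; rewrite subr_ge0 -ler_pdivlMr //; exact: hv1.
exists t; split; first by rewrite divr_gt0.
move=> v; apply/eqP; rewrite -subr_eq0; apply/negPn/negP => nz.
have := @pos_of_eig _ th u0 (ex_intro _ v nz).
have eu : forall v, mulv Q (fun w => psi w - t * phi w) v = th * (psi v - t * phi v).
  by move=> w; rewrite mulvB eph eps; ring.
move=> /(_ eu v1); rewrite /t mulfVK ?subrr ?ltxx // gt_eqF //.
Qed.
End PF1.
Module TopoM.
Import ArrowAsProduct.
Section Topo.
Context (R : realType) (V : finType).

Lemma lin_continuous (c : V -> R) :
  continuous (fun x : V -> R => \sum_(w : V) c w * x w).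
Proof.
have := @continuous_big R V +%R 0 xpredT add_continuous (V -> R) (index_enum V) (fun w x => c w * x w).
move=> H; apply: H => w _ x.
apply: continuousM; first exact: cst_continuous.
exact: (@proj_continuous V (fun _ => R) w).
Qed.

Lemma closed_lin_ge0 (c : V -> R) :
  closed [set x : V -> R | 0 <= \sum_(w : V) c w * x w].
Proof.
apply: (preimage_closed (f := fun x : V -> R => \sum_(w : V) c w * x w) (D := [set r : R | 0 <= r])).
  by move=> x _; apply: lin_continuous.
exact: closed_ge.
Qed.

Lemma closed_lin_eq (c : V -> R) (r : R) :
  closed [set x : V -> R | \sum_(w : V) c w * x w = r].
Proof.
apply: (preimage_closed (f := fun x : V -> R => \sum_(w : V) c w * x w) (D := [set y : R | y = r])).
  by move=> x _; apply: lin_continuous.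
exact: closed_eq.
Qed.

Lemma closed_allv (P : V -> set (V -> R)) : (forall v, closed (P v)) ->
  closed [set x | forall v, P v x].
Proof.
move=> cP.
have -> : [set x | forall v, P v x] = \bigcap_(v in [set: V]) P v.
  by apply/seteqP; split => x /= H v //; apply: H.
by apply: closed_bigI => v _; apply: cP.
Qed.

Lemma closed_nonneg : closed [set x : V -> R | forall v, 0 <= x v].
Proof.
apply: closed_allv => v.
apply: (preimage_closed (f := fun x : V -> R => x v) (D := [set r : R | 0 <= r])).
  by move=> x _; exact: (@proj_continuous V (fun _ => R) v).
exact: closed_ge.
Qed.

Lemma compact_nested (C : R -> set (V -> R)) :
  (forall e, 0 < e -> C e !=set0) ->
  (forall e e', 0 < e -> e <= e' -> C e `<=` C e') ->
  (forall e, 0 < e -> C e `<=` [set x | forall v, `[(0:R), 1]%classic (x v)]) ->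
  (forall e, 0 < e -> closed (C e)) -> exists p, forall e, 0 < e -> C e p.
Proof.
move=> ne mono sub cl.
have cK : compact [set x : V -> R | forall v, `[(0:R), 1]%classic (x v)].
  exact: (@tychonoff V (fun _ => R) (fun _ => `[(0:R), 1]%classic) (fun _ => @segment_compact R 0 1)).
pose F := filter_from [set e : R | 0 < e] C.
have FF : Filter F.
  apply: filter_from_filter; first by exists 1; rewrite /= ltr01.
  move=> i j i0 j0; exists (Num.min i j); first by rewrite /= lt_min i0 j0.
  move=> x Cx; split; apply: (mono (Num.min i j)) => //; rewrite ?lt_min ?i0 ?j0 ?ge_min ?lexx ?orbT //.
have PF : ProperFilter F by apply: filter_from_proper => // e e0; exact: ne.
have FK : F [set x : V -> R | forall v, `[(0:R), 1]%classic (x v)].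
  by exists 1; [rewrite /= ltr01 | exact: sub].
have [p [_ clp]] := cK F PF FK.
exists p => e e0; apply: (cl e e0).
rewrite clusterE in clp; apply: clp; by exists e.
Qed.
End Topo.
End TopoM.
Import TopoM.
Section PF2.
Context (R : realType) (V : finType) (Q : V -> V -> R).
Hypothesis Q0 : forall u v, 0 <= Q u v.
Hypothesis Qirr : forall (S : pred V) v w, S v -> ~~ S w ->
  exists u u', [/\ S u, ~~ S u' & 0 < Q u u'].
Variable v0 : V.

Lemma sum_delta (F : V -> R) v : \sum_w (w == v)%:R * F w = F v.
Proof.
rewrite (bigD1 v) //= eqxx mul1r big1 ?addr0 // => w /negbTE ->; by rewrite mul0r.
Qed.

Lemma lin_mulv (k : R) x v :
  \sum_w (Q v w - (w == v)%:R * k) * x w = mulv Q x v - k * x v.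
Proof.
rewrite /mulv -(sum_delta (fun w => k * x w)) -sumrB; apply: eq_bigr => w _; ring.
Qed.

Definition simplex (x : V -> R) := (forall v, 0 <= x v) /\ \sum_v x v = 1.
Definition Tset := [set t : R | exists x, simplex x /\ forall v, t * x v <= mulv Q x v].

Lemma simplex_le1 x v : simplex x -> x v <= 1.
Proof. by case=> x0 <-; apply: sum_ge_term. Qed.

Lemma Tset0 : Tset 0.
Proof.
exists (fun v => (v == v0)%:R); split.
  split; first by move=> v; rewrite ler0n.
  rewrite (eq_bigr (fun w => (w == v0)%:R * (fun _ => 1) w)) ?sum_delta //.
  by move=> w _; rewrite mulr1.
by move=> v; rewrite mul0r; apply: mulv_ge0 => // w; rewrite ler0n.
Qed.

Lemma Tset_ub t : Tset t -> t <= \sum_v \sum_w Q v w.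
Proof.
case=> x [[x0 x1] H].
have [v hv] := ex_argmax x v0.
have xv : 0 < x v.
  rewrite lt0r x0 andbT; apply/negP => /eqP xv0.
  rewrite xv0 in hv.
  have : \sum_w x w <= \sum_(w : V) (0:R) by apply: ler_sum => w _; exact: hv.
  by rewrite big1_eq x1 ler10.
have h1 : t * x v <= (\sum_w Q v w) * x v.
  apply: (le_trans (H v)); rewrite /mulv mulr_suml; apply: ler_sum => w _.
  by apply: ler_wpM2l.
have h2 : t <= \sum_w Q v w by rewrite -(ler_pM2r xv).
apply: (le_trans h2); apply: (sum_ge_term (F := fun v => \sum_w Q v w)) => u.
by apply: sumr_ge0.
Qed.

Lemma has_supT : has_sup Tset.
Proof.
split; first by exists 0; exact: Tset0.
by exists (\sum_v \sum_w Q v w) => t; apply: Tset_ub.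
Qed.

Definition th := sup Tset.

Lemma th_ge0 : 0 <= th.
Proof. exact: (sup_upper_bound has_supT Tset0). Qed.

Lemma attain : exists p, simplex p /\ forall v, th * p v <= mulv Q p v.
Proof.
pose C e := [set x : V -> R | (forall v, 0 <= x v) /\ ((\sum_w 1 * x w = 1) /\
  (forall v, 0 <= \sum_w (Q v w - (w == v)%:R * (th - e)) * x w))].
have [p Hp] : exists p, forall e, 0 < e -> C e p.
  apply: compact_nested.
  - move=> e e0; have [t [x [sx Hx]] lt] := sup_adherent e0 has_supT.
    exists x; split; first by case: sx.
    split; first by case: sx => _ x1; rewrite -[RHS]x1; apply: eq_bigr => w _; rewrite mul1r.
    move=> v; rewrite lin_mulv subr_ge0; apply: le_trans (Hx v).
    by apply: ler_wpM2r; [case: sx | rewrite ltW].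
  - move=> e e' e0 le x [x0 [x1 H]]; split => //; split => // v.
    move: (H v); rewrite !lin_mulv !subr_ge0 => h; apply: le_trans h.
    by apply: ler_wpM2r => //; rewrite lerD2l lerN2.
  - move=> e e0 x [x0 [x1 H]] v; rewrite /= in_itv /= x0 /=.
    apply: (simplex_le1 (x := x)); split => //; rewrite -[RHS]x1.
    by apply: eq_bigr => w _; rewrite mul1r.
  - move=> e e0; apply: closedI.
      exact: closed_nonneg.
    apply: closedI; first exact: closed_lin_eq.
    by apply: closed_allv => v; exact: closed_lin_ge0.
have [p0 [p1 _]] := Hp 1 ltr01.
have sp : simplex p by split => //; rewrite -[RHS]p1; apply: eq_bigr => w _; rewrite mul1r.
exists p; split => // v; apply/ler_addgt0Pr => e e0.
have [_ [_ H]] := Hp e e0; move: (H v); rewrite lin_mulv subr_ge0 => h.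
have := simplex_le1 v sp; have := p0 v; move: (p v) h => pv h pv0 pv1.
have : e * pv <= e * 1 by apply: ler_wpM2l => //; rewrite ltW.
lra.
Qed.

Definition Aop (u : V -> R) : V -> R := fun v => u v + mulv Q u v.

Lemma Aop_ge u v : (forall w, 0 <= u w) -> u v <= Aop u v.
Proof. by move=> u0; rewrite /Aop lerDl mulv_ge0. Qed.

Lemma Aop_ge0 u : (forall w, 0 <= u w) -> forall v, 0 <= Aop u v.
Proof. by move=> u0 v; apply: le_trans (Aop_ge v u0). Qed.

Lemma iter_ge0 k u : (forall w, 0 <= u w) -> forall v, 0 <= iter k Aop u v.
Proof. by elim: k => //= k IH u0; apply: Aop_ge0; apply: IH. Qed.

Lemma iter_ge k u v : (forall w, 0 <= u w) -> u v <= iter k Aop u v.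
Proof.
move=> u0; elim: k => //= k IH; apply: le_trans IH _; apply: Aop_ge.
exact: iter_ge0.
Qed.

Definition supp (u : V -> R) : {set V} := [set v | 0 < u v].

Lemma supp_grow u : (forall w, 0 <= u w) -> (exists v, 0 < u v) ->
  (exists v, ~~ (0 < u v)) -> (#|supp u| < #|supp (Aop u)|)%N.
Proof.
move=> u0 [w uw] [v uv]; apply: proper_card; apply/properP; split.
  by apply/fintype.subsetP => x; rewrite !inE => h; apply: lt_le_trans h (Aop_ge _ u0).
have := @Qirr [pred v | ~~ (0 < u v)] v w uv; rewrite /= negbK.
move=> /(_ uw) [a [a' [Sa Sa' Qaa']]]; rewrite negbK in Sa'.
exists a; last by rewrite inE.
rewrite inE /Aop /=; apply: (@lt_le_trans _ _ (mulv Q u a)); last by rewrite lerDr.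
apply: lt_le_trans (sum_ge_term a' _); first by rewrite mulr_gt0.
by move=> z; rewrite mulr_ge0.
Qed.

Lemma iter_supp u : (forall w, 0 <= u w) -> (exists v, 0 < u v) ->
  forall k, (minn k.+1 #|V| <= #|supp (iter k Aop u)|)%N.
Proof.
move=> u0 [w uw]; elim => [|k IH].
  rewrite /= (leq_trans (geq_minl _ _)) // card_gt0; apply/set0Pn; exists w; by rewrite inE.
have [[v nv]|nall] := pselect (exists v, ~~ (0 < iter k Aop u v)); last first.
  have all : forall v, 0 < iter k Aop u v.
    by move=> v; apply/negPn/negP => h; apply: nall; exists v.
  suff -> : supp (iter k.+1 Aop u) = [set: V]%SET by rewrite cardsT geq_minr.
  apply/setP => v; rewrite !inE /=.
  have h := Aop_ge v (iter_ge0 k u0); exact: (lt_le_trans (all v) h).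
have := @supp_grow (iter k Aop u) (iter_ge0 k u0).
have h1 : exists v, 0 < iter k Aop u v by exists w; apply: lt_le_trans uw (iter_ge _ _ u0).
move=> /(_ h1 (ex_intro _ v nv)) lt.
have : (minn k.+1 #|V| < #|supp (iter k.+1 Aop u)|)%N by apply: leq_trans lt.
have : (#|supp (iter k.+1 Aop u)| <= #|V|)%N by apply: max_card.
move: (#|supp _|) => a; move: (#|V|) => n; lia.
Qed.

Lemma mulvD x y v : mulv Q (fun w => x w + y w) v = mulv Q x v + mulv Q y v.
Proof. by rewrite /mulv -big_split; apply: eq_bigr => w _; rewrite mulrDr. Qed.

Lemma Aop_comm (t : R) u v :
  mulv Q (Aop u) v - t * Aop u v = Aop (fun w => mulv Q u w - t * u w) v.
Proof.
rewrite /Aop mulvD mulvB; ring.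
Qed.

Lemma iter_comm (t : R) u k v :
  mulv Q (iter k Aop u) v - t * iter k Aop u v =
  iter k Aop (fun w => mulv Q u w - t * u w) v.
Proof.
elim: k v => //= k IH v.
rewrite Aop_comm; congr (Aop _ v); apply: funext => w; exact: IH.
Qed.

Lemma eigen_th : exists p, simplex p /\ forall v, mulv Q p v = th * p v.
Proof.
have [p [[p0 p1] Hp]] := attain.
exists p; split => //.
pose y := fun v => mulv Q p v - th * p v.
have y0 : forall v, 0 <= y v by move=> v; rewrite /y subr_ge0.
have [[v yv]|ny] := pselect (exists v, 0 < y v); last first.
  move=> v; apply/eqP; rewrite -subr_eq0 eq_le y0 andbT leNgt; apply/negP => h.
  by apply: ny; exists v.
exfalso.
pose n := #|V|.
pose z := iter n Aop p; pose yy := iter n Aop y.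
have yypos : forall v, 0 < yy v.
  move=> w; have := iter_supp y0 (ex_intro _ v yv) n.
  rewrite /n minnE subSnn subn1 /= => h.
  have : supp yy = [set: V]%SET.
    apply/eqP; rewrite eqEcard finset.subsetT cardsT; exact: h.
  by move/setP/(_ w); rewrite !inE.
have z0 : forall w, 0 <= z w by apply: iter_ge0.
have eqz : forall w, mulv Q z w - th * z w = yy w by move=> w; apply: iter_comm.
have [v1 hv1] := ex_argmin (fun w => yy w / (z w + 1)) v0.
set e := yy v1 / (z v1 + 1) in hv1.
have e0 : 0 < e by rewrite divr_gt0 // ltr_wpDl.
have ez : forall w, (th + e) * z w <= mulv Q z w.
  move=> w; have := hv1 w; rewrite ler_pdivlMr ?ltr_wpDl // => h.
  have := eqz w; have := z0 w; move: (z w) (yy w) (mulv Q z w) h => a b c h1 h2 h3.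
  nra.
pose sg := \sum_w z w.
have sg1 : 1 <= sg by rewrite -p1 /sg; apply: ler_sum => w _; apply: iter_ge.
have sg0 : 0 < sg by apply: lt_le_trans sg1.
have T1 : Tset (th + e).
  exists (fun w => z w / sg); split.
    split; first by move=> w; rewrite divr_ge0 // ltW.
    by rewrite -mulr_suml divff // gt_eqF.
  move=> w; have -> : mulv Q (fun w => z w / sg) w = mulv Q z w / sg.
    by rewrite /mulv mulr_suml; apply: eq_bigr => u _; rewrite mulrA.
  by rewrite mulrA ler_pM2r ?invr_gt0.
have := sup_upper_bound has_supT T1; rewrite -/th; lra.
Qed.

Lemma mink2 (a b c d m M : R) :
  0 <= m -> m ^+ 2 = a ^+ 2 + b ^+ 2 -> 0 <= M -> c ^+ 2 + d ^+ 2 <= M ^+ 2 ->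
  a * c + b * d <= m * M.
Proof.
move=> m0 em M0 cd.
have cs : (a * c + b * d) ^+ 2 <= (m * M) ^+ 2.
  have h1 : (a * c + b * d) ^+ 2 <= (a ^+ 2 + b ^+ 2) * (c ^+ 2 + d ^+ 2).
    have : 0 <= (a * d - b * c) ^+ 2 by apply: sqr_ge0.
    move=> h; rewrite -subr_ge0; apply: le_trans h _; rewrite le_eqVlt; apply/orP; left.
    apply/eqP; ring.
  apply: le_trans h1 _; rewrite exprMn em; apply: ler_wpM2l => //.
  by rewrite addr_ge0 // sqr_ge0.
have mM : 0 <= m * M by rewrite mulr_ge0.
move: cs mM; move: (a * c + b * d) (m * M) => x y; nra.
Qed.

Lemma tri_seq (s : seq V) (q u w m : V -> R) :
  (forall v, 0 <= q v) -> (forall v, 0 <= m v) ->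
  (forall v, m v ^+ 2 = u v ^+ 2 + w v ^+ 2) ->
  0 <= \sum_(v <- s) q v * m v /\
  (\sum_(v <- s) q v * u v) ^+ 2 + (\sum_(v <- s) q v * w v) ^+ 2 <=
  (\sum_(v <- s) q v * m v) ^+ 2.
Proof.
move=> q0 m0 em; elim: s => [|x s [IH1 IH2]]; first by rewrite !big_nil expr0n /= addr0.
rewrite !big_cons; split; first by rewrite addr_ge0 // mulr_ge0.
have := mink2 (m0 x) (em x) IH1 IH2.
have := em x; have := q0 x; have := m0 x.
move: (q x) (u x) (w x) (m x) (\sum_(j <- s) q j * u j) (\sum_(j <- s) q j * w j)
  (\sum_(j <- s) q j * m j) IH1 IH2 => qq a b mm A B M h1 h2 h3 h4 h5 h6.
have e : (qq * a + A) ^+ 2 + (qq * b + B) ^+ 2 =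
  qq ^+ 2 * (a ^+ 2 + b ^+ 2) + 2 * qq * (a * A + b * B) + (A ^+ 2 + B ^+ 2) by ring.
have e2 : (qq * mm + M) ^+ 2 = qq ^+ 2 * mm ^+ 2 + 2 * qq * (mm * M) + M ^+ 2 by ring.
rewrite e e2 -h5; apply: lerD => //; apply: lerD => //.
by apply: ler_wpM2l => //; rewrite mulr_ge0.
Qed.

Lemma spec_bound phi t : (forall v, 0 < phi v) -> (forall v, mulv Q phi v = t * phi v) ->
  forall a bb, complex_eigenvalue Q a bb -> a ^+ 2 + bb ^+ 2 <= t ^+ 2.
Proof.
move=> phi0 eph a bb [u [w [[v nz] eig]]].
pose m := fun v => Num.sqrt (u v ^+ 2 + w v ^+ 2).
have m0 : forall v, 0 <= m v by move=> x; apply: sqrtr_ge0.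
have em : forall v, m v ^+ 2 = u v ^+ 2 + w v ^+ 2.
  by move=> x; rewrite sqr_sqrtr // addr_ge0 // sqr_ge0.
have key : forall x, (a ^+ 2 + bb ^+ 2) * m x ^+ 2 <= (mulv Q m x) ^+ 2.
  move=> x; have [_ h] := tri_seq (index_enum V) (Q0 x) m0 em.
  have h' : (mulv Q u x) ^+ 2 + (mulv Q w x) ^+ 2 <= (mulv Q m x) ^+ 2 := h.
  have [e1 e2] := eig x; rewrite e1 e2 in h'.
  move: h' => {h} h.
  apply: le_trans h; rewrite em le_eqVlt; apply/orP; left; apply/eqP; ring.
have [v1 hv1] := ex_argmax (fun x => m x / phi x) v0.
set k := m v1 / phi v1 in hv1.
have mk : forall x, m x <= k * phi x by move=> x; rewrite -ler_pdivrMr //; exact: hv1.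
have mvpos : 0 < m v.
  rewrite lt0r m0 andbT; apply/negP => /eqP mv0.
  have := em v; rewrite mv0 expr0n /= => h.
  have hu : u v ^+ 2 = 0.
    apply/eqP; rewrite eq_le sqr_ge0 andbT; have := sqr_ge0 (w v); lra.
  have hw : w v ^+ 2 = 0.
    apply/eqP; rewrite eq_le sqr_ge0 andbT; have := sqr_ge0 (u v); lra.
  move/eqP: hu; rewrite sqrf_eq0 => /eqP hu.
  move/eqP: hw; rewrite sqrf_eq0 => /eqP hw.
  by move: nz; rewrite hu hw eqxx.
have k0 : 0 < k.
  apply: lt_le_trans (hv1 v); by rewrite divr_gt0.
have mv1 : m v1 = k * phi v1 by rewrite /k divfK // gt_eqF.
have Qm : mulv Q m v1 <= k * t * phi v1.
  rewrite -mulrA -eph /mulv mulr_sumr; apply: ler_sum => x _.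
  by rewrite mulrCA ler_wpM2l.
have Qm0 : 0 <= mulv Q m v1 by apply: mulv_ge0.
have := key v1; rewrite mv1 => h.
have h2 : (mulv Q m v1) ^+ 2 <= (k * t * phi v1) ^+ 2.
  by rewrite !expr2 ler_pM.
have kp : 0 < k * phi v1 by rewrite mulr_gt0.
have h3 : (a ^+ 2 + bb ^+ 2) * (k * phi v1) ^+ 2 <= t ^+ 2 * (k * phi v1) ^+ 2.
  apply: le_trans h (le_trans h2 _); rewrite le_eqVlt; apply/orP; left; apply/eqP; ring.
by rewrite ler_pM2r ?exprn_gt0 in h3.
Qed.

Lemma PF_exists : exists t phi, PF_eigenvalue Q t /\ PF_eigenvector Q t phi.
Proof.
have [p [[p0 p1] ep]] := eigen_th.
have pnz : exists v, p v != 0.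
  have [//|h] := pselect (exists v, p v != 0).
  move: p1; rewrite big1 => [/eqP|v _]; first by rewrite eq_sym oner_eq0.
  by apply/eqP/negPn/negP => hv; apply: h; exists v.
have ppos := pos_of_eig Q0 Qirr p0 pnz ep.
exists th, p; split; last by split.
split; first exact: th_ge0.
  exists p, (fun _ => 0); split; first by case: pnz => v hv; exists v; rewrite hv.
  move=> v; rewrite ep !mul0r !mulr0 subr0 addr0; split => //.
  by rewrite /mulv big1 // => w _; rewrite mulr0.
exact: spec_bound ppos ep.
Qed.
End PF2.
Lemma tsumE (R : realType) (T : choiceType) (F : T -> R) (r : seq T) :
  uniq r -> (forall t, t \notin r -> F t = 0) -> tsum F = \sum_(t <- r) F t.
Proof.
move=> ur Fr; rewrite /tsum (fsbigE r) //; last by move=> t _; apply: Fr.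
by apply: eq_bigl => t; rewrite in_setT.
Qed.

Lemma le_bigmax_seq (R : realType) (s : seq R) (i0 : R) t : t \in s ->
  t <= \big[Num.max/i0]_(x <- s) x.
Proof.
elim: s => //= y s IH; rewrite in_cons big_cons => /orP[/eqP ->|/IH h].
  by rewrite le_max lexx.
by rewrite le_max h orbT.
Qed.

Section Main.
Context (R : realType) (d : nat) (X : countType) (V : finType)
  (b : X -> X -> R) (c : X -> R) (act : 'rV[int]_d -> X -> X) (iota : V -> X).
Hypothesis b0 : forall x y, 0 <= b x y.
Hypothesis lf : locally_finite b.
Hypothesis isact : is_action act.
Hypothesis dec_ex : forall x, exists! p : 'rV[int]_d * V, x = act p.1 (iota p.2).
Hypothesis Hinv : H_invariant b c act.

Lemma act0 x : act 0 x = x. Proof. by case: isact. Qed.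
Lemma actD z1 z2 x : act (z1 + z2) x = act z1 (act z2 x). Proof. by case: isact. Qed.
Lemma actK z x : act (- z) (act z x) = x. Proof. by rewrite -actD addNr act0. Qed.
Lemma actKV z x : act z (act (- z) x) = x. Proof. by rewrite -actD addrN act0. Qed.
Lemma act_inj z : injective (act z).
Proof. by move=> x y h; rewrite -(actK z x) h actK. Qed.

Lemma dec_ex' x : exists p : 'rV[int]_d * V, x = act p.1 (iota p.2).
Proof. by have [p [h _]] := dec_ex x; exists p. Qed.

Definition dec (x : X) : 'rV[int]_d * V := proj1_sig (cid (dec_ex' x)).

Lemma decP x : x = act (dec x).1 (iota (dec x).2).
Proof. by rewrite /dec; case: cid. Qed.

Lemma dec_act z v : dec (act z (iota v)) = (z, v).
Proof.
have [p [_ u]] := dec_ex (act z (iota v)).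
by rewrite -(u (z, v)) // -(u _ (decP _)).
Qed.

Lemma dec_inj x y : dec x = dec y -> x = y.
Proof. by move=> h; rewrite (decP x) (decP y) h. Qed.

Definition rb (x : X) : seq X := finmap.enum_fset (fset_set [set y | 0 < b x y]).

Lemma mem_rb x y : (y \in rb x) = (0 < b x y).
Proof.
rewrite /rb in_fset_set; last exact: (lf x).
by rewrite mem_setE.
Qed.

Lemma uniq_rb x : uniq (rb x).
Proof. exact: finmap.fset_uniq. Qed.

Lemma notin_rb x y : y \notin rb x -> b x y = 0.
Proof.
rewrite mem_rb => h; apply/eqP; rewrite eq_le b0 andbT; by rewrite leNgt.
Qed.

Lemma tsum_b (G : X -> R) x : tsum (fun y => b x y * G y) = \sum_(y <- rb x) b x y * G y.
Proof. by apply: tsumE; [exact: uniq_rb | move=> y /notin_rb ->; rewrite mul0r]. Qed.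

Lemma tsum_b1 x : tsum (fun y => b x y) = \sum_(y <- rb x) b x y.
Proof. by apply: tsumE; [exact: uniq_rb | move=> y /notin_rb ->]. Qed.

Lemma HopE f x : Hop b c f x = \sum_(y <- rb x) b x y * (f x - f y) + c x * f x.
Proof. by rewrite /Hop tsum_b. Qed.

Lemma degE x : deg b c x = \sum_(y <- rb x) b x y + c x.
Proof. by rewrite /deg tsum_b1. Qed.


Lemma Hop_delta x y : x != y -> Hop b c (fun u => (u == y)%:R) x = - b x y.
Proof.
move=> xy; rewrite /Hop (negbTE xy) mulr0 addr0.
rewrite (@tsumE _ _ _ [:: y]) //; first by rewrite big_seq1 eqxx sub0r mulrN1.
by move=> u; rewrite inE => /negbTE ->; rewrite subrr mulr0.
Qed.

Lemma binv g x y : x != y -> b (act g x) (act g y) = b x y.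
Proof.
move=> xy; have := Hinv g (fun u => (u == y)%:R) (act g x).
rewrite /transl actK (Hop_delta xy).
have -> : (fun u => (act (- g) u == y)%:R) = (fun u => (u == act g y)%:R :> R).
  apply: funext => u; congr (_%:R).
  by rewrite (can2_eq (actKV g) (actK g)).
rewrite Hop_delta; first by move/oppr_inj.
by apply/negP => /eqP /act_inj /eqP; apply/negP.
Qed.

Lemma Hop_scale k f x : Hop b c (fun u => k * f u) x = k * Hop b c f x.
Proof.
rewrite !HopE mulrDr mulr_sumr; congr (_ + _); last by ring.
by apply: eq_bigr => y _; ring.
Qed.

Lemma Hop_mult f gam : multiplicative_with act f gam ->
  forall z x, Hop b c f (act z x) = gam z * Hop b c f x.
Proof.
move=> [_ mf] z x; have := Hinv (- z) f x; rewrite /transl opprK => <-.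
have -> : (fun u => f (act z u)) = (fun u => gam z * f u) by apply: funext => u; apply: mf.
by rewrite Hop_scale.
Qed.

Section Key.
Variable a : 'rV[R]_d.

Definition Qs v w := tsum (fun z : 'rV[int]_d => b (iota v) (act z (iota w)) * expR (ip a z)).

Definition zs v w : seq 'rV[int]_d :=
  [seq (dec y).1 | y <- [seq y <- rb (iota v) | (dec y).2 == w]].

Lemma mem_zs v w z : 0 < b (iota v) (act z (iota w)) -> z \in zs v w.
Proof.
move=> h; apply/mapP; exists (act z (iota w)); last by rewrite dec_act.
by rewrite mem_filter dec_act eqxx mem_rb.
Qed.

Lemma uniq_zs v w : uniq (zs v w).
Proof.
rewrite map_inj_in_uniq ?filter_uniq ?uniq_rb //.
move=> y1 y2; rewrite !mem_filter => /andP[/eqP e1 _] /andP[/eqP e2 _] e.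
by apply: dec_inj; move: e1 e2 e; case: (dec y1) => ? ?; case: (dec y2) => ? ? /= -> -> ->.
Qed.

Lemma QsE v w : Qs v w = \sum_(z <- zs v w) b (iota v) (act z (iota w)) * expR (ip a z).
Proof.
apply: tsumE; first exact: uniq_zs.
move=> z nz; have : ~~ (0 < b (iota v) (act z (iota w))) by apply: contra nz; apply: mem_zs.
rewrite lt0r b0 andbT negbK => /eqP ->; by rewrite mul0r.
Qed.

Lemma Qs_ge0 v w : 0 <= Qs v w.
Proof. by rewrite QsE sumr_ge0 // => z _; rewrite mulr_ge0 // ltW // expR_gt0. Qed.

Lemma Qs_ge v w z : b (iota v) (act z (iota w)) * expR (ip a z) <= Qs v w.
Proof.
have [h|] := ltP 0 (b (iota v) (act z (iota w))); last first.
  by move=> h; apply: le_trans (Qs_ge0 v w); rewrite mulr_le0_ge0 // ltW // expR_gt0.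
rewrite QsE (bigD1_seq z) ?uniq_zs ?mem_zs //= lerDl sumr_ge0 // => y _.
by rewrite mulr_ge0 // ltW // expR_gt0.
Qed.

Lemma key f (psi : V -> R) v :
  (forall z w, f (act z (iota w)) = expR (ip a z) * psi w) ->
  \sum_(y <- rb (iota v)) b (iota v) y * f y = \sum_w Qs v w * psi w.
Proof.
move=> hf.
have -> : \sum_(y <- rb (iota v)) b (iota v) y * f y =
   \sum_(y <- rb (iota v)) \sum_(w : V) ((dec y).2 == w)%:R * (b (iota v) y * f y).
  apply: eq_bigr => y _; rewrite (bigD1 (dec y).2) //= eqxx mul1r big1 ?addr0 //.
  by move=> w /negbTE; rewrite eq_sym => ->; rewrite mul0r.
rewrite exchange_big /=; apply: eq_bigr => w _.
rewrite QsE mulr_suml big_map big_filter [RHS]big_mkcond /=.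
apply: eq_bigr => y _; case: eqP => [e|]; last by rewrite mul0r.
rewrite mul1r -mulrA -hf -e -decP //.
Qed.

End Key.


Notation Q a := (Qmat b c act iota a).
Notation MD := (maxdeg b c iota).

Lemma maxdeg_ge v : deg b c (iota v) <= MD.
Proof.
rewrite /maxdeg; apply: le_bigmax_seq; apply/mapP; exists v => //; exact: mem_enum.
Qed.

Lemma Q_ge0 a v w : 0 <= Q a v w.
Proof.
rewrite /Qmat addr_ge0 //; first exact: Qs_ge0.
by case: eqP => // _; rewrite subr_ge0 maxdeg_ge.
Qed.

Lemma mulvQ a psi v :
  mulv (Q a) psi v = \sum_w Qs a v w * psi w + (MD - deg b c (iota v)) * psi v.
Proof.
rewrite /mulv /Qmat; under eq_bigr do rewrite mulrDl; rewrite big_split /=; congr (_ + _).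
rewrite (bigD1 v) //= eqxx big1 ?addr0 // => w; rewrite eq_sym => /negbTE ->.
by rewrite mul0r.
Qed.

Lemma ip0 (a : 'rV[R]_d) : ip a 0 = 0.
Proof. by rewrite /ip big1 // => i _; rewrite mxE mulr0. Qed.

Lemma hop_iota a f psi v :
  (forall z w, f (act z (iota w)) = expR (ip a z) * psi w) ->
  Hop b c f (iota v) = MD * psi v - mulv (Q a) psi v.
Proof.
move=> hf; have fv : f (iota v) = psi v by rewrite -[iota v]act0 hf ip0 expR0 mul1r.
rewrite HopE mulvQ -(@key a f psi v hf) fv.
have -> : \sum_(y <- rb (iota v)) b (iota v) y * (psi v - f y) =
   (\sum_(y <- rb (iota v)) b (iota v) y) * psi v - \sum_(y <- rb (iota v)) b (iota v) y * f y.
  by rewrite mulr_suml -sumrB; apply: eq_bigr => y _; ring.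
rewrite degE; ring.
Qed.

Lemma dec_iota v : dec (iota v) = (0, v).
Proof. by rewrite -{1}[iota v]act0 dec_act. Qed.

Lemma path_cross (S : pred V) s x :
  path (fun u w => 0 < b u w) x s -> S (dec x).2 -> ~~ S (dec (last x s)).2 ->
  exists x' y', [/\ 0 < b x' y', S (dec x').2 & ~~ S (dec y').2].
Proof.
elim: s x => [|y s IH] x /=; first by move=> _ ->.
move=> /andP[bxy p] Sx; case: (boolP (S (dec y).2)) => Sy; first exact: IH.
by move=> _; exists x, y.
Qed.

Lemma Q_irr a : graph_connected b -> forall (S : pred V) v w, S v -> ~~ S w ->
  exists u u', [/\ S u, ~~ S u' & 0 < Q a u u'].
Proof.
move=> conn S v w Sv Sw.
have [s /andP[p /eqP l]] := conn (iota v) (iota w).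
have := @path_cross S s (iota v) p; rewrite l !dec_iota /= => /(_ Sv Sw).
move=> [x [y [bxy Sx Sy]]].
exists (dec x).2, (dec y).2; split => //.
have uu : (dec x).2 != (dec y).2 by apply: contraNneq Sy => <-.
rewrite /Qmat (negbTE uu) addr0.
apply: lt_le_trans (Qs_ge _ _ _ (- (dec x).1 + (dec y).1)).
rewrite mulr_gt0 ?expR_gt0 // actD -{1}[iota (dec x).2](actK (dec x).1) -!decP binv //.
by apply: contraNneq uu => ->.
Qed.

Lemma Kset_props x0 lam f : Kset b c x0 lam f ->
  [/\ (forall x, 0 <= f x), f x0 = 1 & Defs.harmonic b c lam f].
Proof.
move=> K; split.
- move=> x; rewrite leNgt; apply/negP => fx.
  have fx' : 0 < - f x by rewrite oppr_gt0.
  have [g [[g0 _ _ _] hg]] := K [:: x] (- f x) fx'.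
  have := hg x (mem_head _ _); have := ler_norm (g x - f x); have := g0 x; lra.
- apply/eqP; rewrite -subr_eq0 -normr_le0; apply/ler_addgt0Pr => e e0.
  have [g [[_ _ _ g1] hg]] := K [:: x0] e e0.
  by have := hg x0 (mem_head _ _); rewrite g1 add0r distrC => /ltW.
move=> x; apply/eqP; rewrite -normr_le0; apply/ler_addgt0Pr => eps eps0; rewrite add0r.
pose Kc := \sum_(y <- rb x) b x y * 2 + `|c x| + `|lam| + 1.
have Kc0 : 0 < Kc.
  rewrite /Kc ltr_wpDl // addr_ge0 ?normr_ge0 // addr_ge0 ?normr_ge0 //.
  by rewrite sumr_ge0 // => y _; rewrite mulr_ge0.
pose e := eps / Kc.
have e0 : 0 < e by rewrite divr_gt0.
have [g [[_ _ hg _] close]] := K (x :: rb x) e e0.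
have dx : `|f x - g x| <= e by rewrite distrC ltW // close // mem_head.
have dy : forall y, y \in rb x -> `|f y - g y| <= e.
  by move=> y yr; rewrite distrC ltW // close // in_cons yr orbT.
have Lf : Hop b c f x - lam * f x =
   \sum_(y <- rb x) b x y * ((f x - g x) - (f y - g y)) + (c x - lam) * (f x - g x).
  have := hg x; rewrite !HopE => hgx.
  have E : forall A B : R, B = 0 -> A = A - B by move=> A B ->; rewrite subr0.
  rewrite [LHS](E _ _ hgx).
  have -> : \sum_(y <- rb x) b x y * (f x - g x - (f y - g y)) =
    \sum_(y <- rb x) b x y * (f x - f y) - \sum_(y <- rb x) b x y * (g x - g y).
    by rewrite -sumrB; apply: eq_bigr => y _; ring.
  ring.
rewrite Lf; apply: le_trans (ler_normD _ _) _.
have h1 : `|\sum_(y <- rb x) b x y * (f x - g x - (f y - g y))| <=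
          (\sum_(y <- rb x) b x y * 2) * e.
  apply: le_trans (ler_norm_sum _ _ _) _; rewrite mulr_suml big_seq_cond [X in _ <= X]big_seq_cond.
  apply: ler_sum => y /andP[yr _]; rewrite normrM ger0_norm // -mulrA ler_wpM2l //.
  apply: le_trans (ler_normB _ _) _; have := dy y yr; lra.
have h2 : `|(c x - lam) * (f x - g x)| <= (`|c x| + `|lam|) * e.
  rewrite normrM; apply: ler_pM; [exact: normr_ge0 | exact: normr_ge0 | exact: ler_normB | exact: dx].
have : (\sum_(y <- rb x) b x y * 2 + (`|c x| + `|lam|)) * e <= eps.
  rewrite /e mulrA ler_pdivrMr // [X in _ <= X]mulrC ler_pM2r //; rewrite /Kc; lra.
move: h1 h2; rewrite mulrDl; lra.
Qed.

Section Rho.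

Lemma ipD (a : 'rV[R]_d) z1 z2 : ip a (z1 + z2) = ip a z1 + ip a z2.
Proof. by rewrite /ip -big_split; apply: eq_bigr => i _; rewrite mxE intrD mulrDr. Qed.

Lemma ip_delta (a : 'rV[R]_d) i : ip a (delta_mx 0 i) = a 0 i.
Proof.
rewrite /ip (bigD1 i) //= big1 => [|j ji]; first by rewrite mxE !eqxx /= mulr1z mulr1 addr0.
by rewrite mxE eqxx (negbTE ji) /= mulr0z mulr0.
Qed.

Lemma rho_of_gam (gam : 'rV[int]_d -> R) : is_character gam ->
  exists a : 'rV[R]_d, forall z, ln (gam z) = ip a z.
Proof.
move=> [g0 gD]; pose L z := ln (gam z).
have LD z1 z2 : L (z1 + z2) = L z1 + L z2 by rewrite /L gD lnM // posrE.
have L0 : L 0 = 0 by have := LD 0 0; rewrite addr0; lra.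
have LN z : L (- z) = - L z by have := LD z (- z); rewrite addrN L0; lra.
have LMn z n : L (z *+ n) = L z *+ n.
  by elim: n => [|n IH]; rewrite ?mulr0n // !mulrS LD IH.
have LMz z k : L (z *~ k) = L z *~ k.
  by case: k => n; [rewrite -!pmulrn LMn | rewrite NegzE !mulrNz -!pmulrn LN LMn].
exists (\row_i L (delta_mx 0 i)) => z.
change (L z = ip (\row_i L (delta_mx 0 i)) z); rewrite {1}[z]row_sum_delta /ip.
have -> : L (\sum_(j < d) z 0 j *: delta_mx 0 j) = \sum_(j < d) L (z 0 j *: delta_mx 0 j).
  by elim/big_rec2: _ => [|j y1 y2 _ <-]; rewrite ?L0 ?LD.
apply: eq_bigr => j _; rewrite mxE mulrzr -LMz; congr (L _).
by rewrite -scaler_int intz.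
Qed.

End Rho.

Lemma mult_form f gam (a : 'rV[R]_d) : multiplicative_with act f gam ->
  (forall z, ln (gam z) = ip a z) ->
  forall z w, f (act z (iota w)) = expR (ip a z) * f (iota w).
Proof.
move=> [[g0 _] mf] lg z w; rewrite mf -lg lnK // posrE; exact: g0.
Qed.

Lemma harm_eig lam f (a : 'rV[R]_d) psi :
  (forall z w, f (act z (iota w)) = expR (ip a z) * psi w) ->
  Defs.harmonic b c lam f -> forall v, mulv (Q a) psi v = (MD - lam) * psi v.
Proof.
move=> hf hh v; have := hh (iota v); rewrite (hop_iota v hf).
have -> : f (iota v) = psi v by rewrite -[iota v]act0 hf ip0 expR0 mul1r.
move=> h; have := h; lra.
Qed.

Variable x0 : X.
Hypothesis conn : graph_connected b.

Lemma MR_pos f (a : 'rV[R]_d) : MRset b c act x0 f -> rho_is act f a ->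
  [/\ (forall v, 0 < f (iota v)),
      (forall z w, f (act z (iota w)) = expR (ip a z) * f (iota w)) &
      exists mu, forall v, mulv (Q a) (fun w => f (iota w)) v = mu * f (iota v)].
Proof.
move=> [lam [K _]] [gam [mg lg]].
have [f0 f1 fh] := Kset_props K.
have hf := mult_form mg lg.
have eig := harm_eig hf fh.
split => //; last by exists (MD - lam).
apply: (pos_of_eig (@Q_ge0 a) (Q_irr a conn) (fun v => f0 (iota v)) _ eig).
exists (dec x0).2; apply/negP => /eqP h.
by move: f1; rewrite {1}(decP x0) hf h mulr0 => /eqP; rewrite eq_sym oner_eq0.
Qed.

Lemma part1 f : MRset b c act x0 f -> exists! a : 'rV[R]_d, rho_is act f a.
Proof.
move=> MRf; have [lam [K [gam mg]]] := MRf.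
have [_ f1 _] := Kset_props K.
have [a la] := rho_of_gam (proj1 mg).
exists a; split; first by exists gam.
move=> a' [gam' [mg' la']].
have eg : forall z, gam z = gam' z.
  move=> z; have := (proj2 mg) z x0; have := (proj2 mg') z x0; rewrite f1 !mulr1 => <- //.
apply/rowP => i; rewrite -ip_delta -(ip_delta a') -la -la' eg //.
Qed.

Lemma part2 f g (a : 'rV[R]_d) : MRset b c act x0 f -> MRset b c act x0 g ->
  rho_is act f a -> rho_is act g a -> f = g.
Proof.
move=> MRf MRg rf rg.
have [fpos hf [muf ef]] := MR_pos MRf rf.
have [gpos hg [mug eg]] := MR_pos MRg rg.
have [_ [t [t0 ht]]] := eig_prop (@Q_ge0 a) (Q_irr a conn) (dec x0).2 fpos ef gpos eg.
have [lf1 [Kf _]] := MRf; have [lg1 [Kg _]] := MRg.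
have [_ f1 _] := Kset_props Kf; have [_ g1 _] := Kset_props Kg.
have t1 : t = 1.
  have e1 : expR (ip a (dec x0).1) * f (iota (dec x0).2) = 1 by rewrite -hf -decP.
  have e2 : expR (ip a (dec x0).1) * (t * f (iota (dec x0).2)) = 1 by rewrite -ht -hg -decP.
  by rewrite mulrCA e1 mulr1 in e2.
apply: funext => x; rewrite (decP x) hf hg ht t1 mul1r //.
Qed.

Lemma part4 (a : 'rV[R]_d) : exists th (phi : V -> R),
  [/\ PF_eigenvalue (Q a) th, PF_eigenvector (Q a) th phi &
      exists z v, x0 = act z (iota v) /\ expR (ip a z) * phi v = 1].
Proof.
have [th [phi [PFv [phi0 eph]]]] := PF_exists (@Q_ge0 a) (Q_irr a conn) (dec x0).2.
set z0 := (dec x0).1; set v0 := (dec x0).2.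
pose k := (expR (ip a z0) * phi v0)^-1.
have k0 : 0 < k by rewrite invr_gt0 mulr_gt0 ?expR_gt0.
exists th, (fun v => k * phi v); split => //.
  split; first by move=> v; rewrite mulr_gt0.
  move=> v; rewrite /mulv; under eq_bigr do rewrite mulrCA.
  by rewrite -mulr_sumr; have := eph v; rewrite /mulv => ->; rewrite mulrCA.
exists z0, v0; split; first exact: decP.
by rewrite mulrCA /k mulVf // gt_eqF // mulr_gt0 ?expR_gt0.
Qed.

Lemma part5 (a : 'rV[R]_d) th (phi : V -> R) f :
  PF_eigenvalue (Q a) th -> PF_eigenvector (Q a) th phi ->
  (forall z v, f (act z (iota v)) = expR (ip a z) * phi v) ->
  f x0 = 1 -> Mset b c act x0 (MD - th) f /\ rho_is act f a.
Proof.
move=> _ [phi0 eph] hf f1.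
pose gam := fun z : 'rV[int]_d => expR (ip a z).
have mg : multiplicative_with act f gam.
  split; first by split => [z|z1 z2]; rewrite /gam ?expR_gt0 // ipD expRD.
  move=> z x; rewrite (decP x) -actD !hf /gam ipD expRD mulrA //.
have fpos : forall x, 0 <= f x.
  by move=> x; rewrite (decP x) hf mulr_ge0 // ltW ?expR_gt0 ?phi0.
have fh : Defs.harmonic b c (MD - th) f.
  move=> x; rewrite (decP x) (Hop_mult mg) (hop_iota _ hf) hf eph /gam; ring.
split; last by exists gam; split => // z; rewrite /gam expRK.
split; last by exists gam.
move=> F e e0; exists f; split.
  split => //; last by exists x0; rewrite f1 oner_neq0.
by move=> x _; rewrite subrr normr0.
Qed.

Lemma part3 (a : 'rV[R]_d) : exists f, MRset b c act x0 f /\ rho_is act f a.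
Proof.
have [th [phi [PFv PFe [z [v [ex0 n1]]]]]] := part4 a.
pose f := fun x => expR (ip a (dec x).1) * phi (dec x).2.
have hf : forall z v, f (act z (iota v)) = expR (ip a z) * phi v by move=> z' v'; rewrite /f dec_act.
have f1 : f x0 = 1 by rewrite ex0 hf.
have [M rh] := part5 PFv PFe hf f1.
by exists f; split => //; exists (MD - th).
Qed.

Lemma main_parts :
  let MR := MRset b c act x0 in
  let Q := Qmat b c act iota in
  [/\ (forall f, MR f -> exists! a : 'rV[R]_d, rho_is act f a),
      (forall f g (a : 'rV[R]_d), MR f -> MR g -> rho_is act f a -> rho_is act g a -> f = g),
      (forall a : 'rV[R]_d, exists f, MR f /\ rho_is act f a),
      (forall a : 'rV[R]_d, exists th (phi : V -> R),
          [/\ PF_eigenvalue (Q a) th, PF_eigenvector (Q a) th phi &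
              exists z v, x0 = act z (iota v) /\ expR (ip a z) * phi v = 1]) &
      (forall (a : 'rV[R]_d) (th : R) (phi : V -> R) (f : X -> R),
          PF_eigenvalue (Q a) th -> PF_eigenvector (Q a) th phi ->
          (forall z v, f (act z (iota v)) = expR (ip a z) * phi v) ->
          f x0 = 1 ->
          Mset b c act x0 (maxdeg b c iota - th) f /\ rho_is act f a)].
Proof.
split.
- exact: part1.
- move=> f g a; exact: part2.
- exact: part3.
- exact: part4.
- move=> a th phi f; exact: part5.
Qed.

End Main.

Unset Implicit Arguments.
Set Strict Implicit.
Theorem lemma12 (R : realType) (d : nat) (X : countType) (V : finType)
  (b : X -> X -> R) (c : X -> R) (act : 'rV[int]_d -> X -> X) (iota : V -> X) (x0 : X) :
  (forall x y, 0 <= b x y) ->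
  locally_finite b -> graph_connected b ->
  is_action act ->
  (forall x, exists! p : 'rV[int]_d * V, x = act p.1 (iota p.2)) ->
  H_invariant b c act ->
  let MR := MRset b c act x0 in
  let Q := Qmat b c act iota in
  [/\ (forall f, MR f -> exists! a : 'rV[R]_d, rho_is act f a),
      (forall f g (a : 'rV[R]_d), MR f -> MR g -> rho_is act f a -> rho_is act g a -> f = g),
      (forall a : 'rV[R]_d, exists f, MR f /\ rho_is act f a),
      (forall a : 'rV[R]_d, exists th (phi : V -> R),
          [/\ PF_eigenvalue (Q a) th, PF_eigenvector (Q a) th phi &
              exists z v, x0 = act z (iota v) /\ expR (ip a z) * phi v = 1]) &
      (forall (a : 'rV[R]_d) (th : R) (phi : V -> R) (f : X -> R),
          PF_eigenvalue (Q a) th -> PF_eigenvector (Q a) th phi ->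
          (forall z v, f (act z (iota v)) = expR (ip a z) * phi v) ->
          f x0 = 1 ->
          Mset b c act x0 (maxdeg b c iota - th) f /\ rho_is act f a)].
Proof.
move=> b0 lf conn isact dec_ex Hinv.
exact: (@main_parts R d X V b c act iota b0 lf isact dec_ex Hinv x0 conn).
Qed.
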